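(* Let $\mathbb{T}=\mathbb{R}/2\pi\mathbb{Z}$, let $(a_k)_{k\ge1},(b_k)_{k\ge1}$ be independent stationary centered Gaussian sequences with common correlation function $\rho$ ($\mathbb{E}[a_ka_l]=\mathbb{E}[b_kb_l]=\rho(k-l)$), whose spectral measure $\mu$ (defined by $\rho(k)=\frac1{2\pi}\int_{\mathbb{T}}e^{-iku}d\mu(u)$) has a continuous positive density $\psi$ with respect to Lebesgue measure on $\mathbb{T}$. Let $X_n(s)=\frac{1}{\sqrt n}\sum_{k=1}^n(a_k\cos(ks)+b_k\sin(ks))$ and $r_n(s,t)=\mathbb{E}[X_n(s)X_n(t)]$. Let $a,b\in\{0,1\}$ and $0<\alpha<1$. Then there is a constant $C$ such that for all $n\ge1$ and all $s,t\in\mathbb{T}$, \[|r_n^{(a,b)}(s,t)|\le C\,\frac{n^{a+b}}{(n\,\mathrm{dist}(s,t))^{\alpha}} .\]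
   Context: $r_n^{(a,b)}=\partial_1^a\partial_2^b r_n$. For $s,t\in\mathbb{T}$, $\mathrm{dist}(s,t)$ is the distance from $s-t$ to $2\pi\mathbb{Z}$. *)

(* Defs.v *)
From Stdlib Require Import Reals Lra.
From Coquelicot Require Import Coquelicot.
Open Scope R_scope.

(* Spectral representation: rho k = (1/2pi) int_T e^{-iku} psi(u) du,
   written out as real part / imaginary part over one period [0, 2pi]. *)
Definition spectral_density_of (rho : Z -> R) (psi : R -> R) : Prop :=
  forall k : Z,
    rho k = / (2 * PI) * RInt (fun u => cos (IZR k * u) * psi u) 0 (2 * PI) /\
    0 = - / (2 * PI) * RInt (fun u => sin (IZR k * u) * psi u) 0 (2 * PI).

Definition cont_pos_density_on_T (psi : R -> R) : Prop :=
  (forall u, continuous psi u) /\ (forall u, psi (u + 2 * PI) = psi u) /\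
  (forall u, 0 < psi u).

(* r_n(s,t) = E[X_n(s) X_n(t)]
   = (1/n) sum_{k,l=1}^n ( E[a_k a_l] cos(ks) cos(lt) + E[b_k b_l] sin(ks) sin(lt) )
   with E[a_k a_l] = E[b_k b_l] = rho(k-l), E[a_k b_l] = 0, E a_k = E b_k = 0. *)
Definition r_cov (rho : Z -> R) (n : nat) (s t : R) : R :=
  / INR n * sum_f_R0 (fun i =>
    sum_f_R0 (fun j =>
      let k := S i in let l := S j in
      rho (Z.of_nat k - Z.of_nat l)%Z *
        (cos (INR k * s) * cos (INR l * t) + sin (INR k * s) * sin (INR l * t)))
    (n - 1)) (n - 1).

Definition r_der (rho : Z -> R) (a b n : nat) (s t : R) : R :=
  Derive_n (fun s' => Derive_n (fun t' => r_cov rho n s' t') b t) a s.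

Definition distT (s t : R) : R :=
  let x := (s - t) / (2 * PI) in
  2 * PI * Rmin (frac_part x) (1 - frac_part x).

(* Main.v *)
From Stdlib Require Import Reals Lra Lia.
From Coquelicot Require Import Coquelicot.
Require Import Defs.
Open Scope R_scope.

Fixpoint ssum (f : nat -> R) (N : nat) : R :=
  match N with O => 0 | S m => ssum f m + f (S m) end.

Lemma sum_f_ssum F m : sum_f_R0 (fun i => F (S i)) m = ssum F (S m).
Proof. induction m; simpl. ring. rewrite IHm. simpl. ring. Qed.

Lemma ssum_ext f g N : (forall k, f k = g k) -> ssum f N = ssum g N.
Proof. intros H; induction N; simpl; auto. rewrite IHN, H; auto. Qed.

Lemma ssum_plus f g N : ssum (fun k => f k + g k) N = ssum f N + ssum g N.
Proof. induction N; simpl. ring. rewrite IHN; ring. Qed.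

Lemma ssum_scal a f N : ssum (fun k => a * f k) N = a * ssum f N.
Proof. induction N; simpl. ring. rewrite IHN; ring. Qed.



Lemma ssum_prod f g N M :
  ssum (fun k => ssum (fun l => f k * g l) M) N = ssum f N * ssum g M.
Proof.
  rewrite (ssum_ext _ (fun k => f k * ssum g M)).
  2:{ intros k. apply ssum_scal. }
  induction N as [|N IH]; simpl. ring. rewrite IH; ring.
Qed.

Lemma ssum_abs_le f g N : (forall k, Rabs (f k) <= g k) -> Rabs (ssum f N) <= ssum g N.
Proof.
  intros H; induction N; simpl. rewrite Rabs_R0; lra.
  eapply Rle_trans. apply Rabs_triang. specialize (H (S N)). lra.
Qed.

Lemma is_derive_ssum (f : nat -> R -> R) (df : nat -> R) N x :
  (forall k, is_derive (f k) x (df k)) ->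
  is_derive (fun y => ssum (fun k => f k y) N) x (ssum df N).
Proof.
  intros H; induction N; simpl.
  - apply (is_derive_const (K:=R_AbsRing) (V:=R_NormedModule) 0 x).
  - apply (is_derive_plus (K:=R_AbsRing) (V:=R_NormedModule)); auto.
Qed.

Lemma is_RInt_ssum (f : nat -> R -> R) (F : nat -> R) N a b :
  (forall k, is_RInt (f k) a b (F k)) ->
  is_RInt (fun u => ssum (fun k => f k u) N) a b (ssum F N).
Proof.
  intros H; induction N; simpl.
  - pose proof (is_RInt_const (V:=R_NormedModule) a b 0) as H0.
    rewrite (scal_zero_r (V:=R_NormedModule)) in H0. exact H0.
  - apply (is_RInt_plus (V:=R_NormedModule)); auto.
Qed.
Definition Gdef (rho : Z -> R) (n p q : nat) (c s t : R) : R :=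
  / INR n * ssum (fun k => ssum (fun l =>
     rho (Z.of_nat k - Z.of_nat l)%Z *
       (INR k ^ p * INR l ^ q * cos (INR k * s - INR l * t + c))) n) n.

Lemma rcov_G rho n s t : (1 <= n)%nat -> r_cov rho n s t = Gdef rho n 0 0 0 s t.
Proof.
  intros Hn. unfold r_cov, Gdef. destruct n as [|m]. lia.
  replace (S m - 1)%nat with m by lia. f_equal.
  rewrite <- (sum_f_ssum (fun k => ssum (fun l =>
     rho (Z.of_nat k - Z.of_nat l)%Z *
       (INR k ^ 0 * INR l ^ 0 * cos (INR k * s - INR l * t + 0))) (S m))).
  apply sum_eq. intros i _. cbv zeta.
  rewrite <- sum_f_ssum. apply sum_eq. intros j _.
  simpl. rewrite Rplus_0_r, cos_minus. ring.
Qed.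

Lemma dG_s rho n p q c s t :
  is_derive (fun s' => Gdef rho n p q c s' t) s (Gdef rho n (S p) q (c + PI/2) s t).
Proof.
  unfold Gdef. apply is_derive_scal.
  apply is_derive_ssum; intros k. apply is_derive_ssum; intros l.
  auto_derive; auto.
  replace (INR k * s - INR l * t + (c + PI / 2)) with ((INR k * s + - (INR l * t) + c) + PI/2) by ring.
  rewrite cos_plus, cos_PI2, sin_PI2. simpl. ring.
Qed.

Lemma dG_t rho n p q c s t :
  is_derive (fun t' => Gdef rho n p q c s t') t (Gdef rho n p (S q) (c - PI/2) s t).
Proof.
  unfold Gdef. apply is_derive_scal.
  apply is_derive_ssum; intros k. apply is_derive_ssum; intros l.
  auto_derive; auto.
  replace (INR k * s - INR l * t + (c - PI / 2)) with ((INR k * s + - (INR l * t) + c) - PI/2) by ring.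
  rewrite cos_minus, cos_PI2, sin_PI2. simpl. ring.
Qed.

Lemma inner_G rho n b s t : (1 <= n)%nat -> (b <= 1)%nat ->
  Derive_n (fun t' => r_cov rho n s t') b t = Gdef rho n 0 b (- INR b * PI/2) s t.
Proof.
  intros Hn Hb. destruct b as [|[|]]; try lia; simpl.
  - rewrite rcov_G by auto. f_equal. lra.
  - rewrite (Derive_ext _ (fun t' => Gdef rho n 0 0 0 s t')).
    2:{ intros; apply rcov_G; auto. }
    replace (- (1) * PI / 2) with (0 - PI/2) by lra.
    apply is_derive_unique, dG_t.
Qed.

Lemma rder_G rho a b n s t : (1 <= n)%nat -> (a <= 1)%nat -> (b <= 1)%nat ->
  r_der rho a b n s t = Gdef rho n a b (INR a * PI/2 - INR b * PI/2) s t.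
Proof.
  intros Hn Ha Hb. unfold r_der. destruct a as [|[|]]; try lia; simpl.
  - rewrite inner_G by auto. f_equal. lra.
  - rewrite (Derive_ext _ (fun s' => Gdef rho n 0 b (- INR b * PI/2) s' t)).
    2:{ intros; apply inner_G; auto. }
    replace (1 * PI / 2 - INR b * PI / 2) with (- INR b * PI/2 + PI/2) by lra.
    apply is_derive_unique, dG_s.
Qed.

Definition Kern (n p q : nat) (c x y : R) : R :=
  ssum (fun k => ssum (fun l =>
     INR k ^ p * INR l ^ q * cos (INR k * x - INR l * y + c)) n) n.

Lemma cont_mul_g (g psi : R -> R) u : ex_derive g u -> continuous psi u ->
  continuous (fun u => g u * psi u) u.
Proof.
  intros Hg Hp. apply (continuous_mult (K:=R_AbsRing) g psi); auto.
  apply (ex_derive_continuous (K:=R_AbsRing) (V:=R_NormedModule)); auto.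
Qed.

Lemma term_int rho psi k l p q c s t :
  spectral_density_of rho psi -> (forall u, continuous psi u) ->
  is_RInt (fun u => psi u * (INR k ^ p * INR l ^ q * cos (INR k * (s - u) - INR l * (t - u) + c)))
    0 (2 * PI) (2 * PI * (rho (Z.of_nat k - Z.of_nat l)%Z *
       (INR k ^ p * INR l ^ q * cos (INR k * s - INR l * t + c)))).
Proof.
  intros Hsp Hpsi.
  destruct (Hsp (Z.of_nat k - Z.of_nat l)%Z) as [H1 H2].
  rewrite minus_IZR, <- !INR_IZR_INZ in H1, H2.
  set (m := INR k - INR l) in *.
  set (A := INR k * s - INR l * t + c).
  set (w := INR k ^ p * INR l ^ q).
  assert (Ec : ex_RInt (fun u => cos (m * u) * psi u) 0 (2 * PI)).
  { apply (ex_RInt_continuous (V:=R_CompleteNormedModule)); intros z _. apply cont_mul_g; auto. auto_derive; auto. }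
  assert (Es : ex_RInt (fun u => sin (m * u) * psi u) 0 (2 * PI)).
  { apply (ex_RInt_continuous (V:=R_CompleteNormedModule)); intros z _. apply cont_mul_g; auto. auto_derive; auto. }
  assert (PIpos := PI_RGT_0).
  assert (Hc : is_RInt (fun u => cos (m * u) * psi u) 0 (2 * PI) (2 * PI * rho (Z.of_nat k - Z.of_nat l)%Z)).
  { assert (E : @eq R (RInt (fun u => cos (m * u) * psi u) 0 (2 * PI)) (2 * PI * rho (Z.of_nat k - Z.of_nat l)%Z)).
    { rewrite H1, <- Rmult_assoc, Rinv_r, Rmult_1_l; [reflexivity|lra]. }
    rewrite <- E. apply (RInt_correct (V:=R_CompleteNormedModule)); auto. }
  assert (Hs : is_RInt (fun u => sin (m * u) * psi u) 0 (2 * PI) 0).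
  { assert (E : @eq R (RInt (fun u => sin (m * u) * psi u) 0 (2 * PI)) 0).
    { assert (/ (2 * PI) <> 0) by (apply Rinv_neq_0_compat; lra). nra. }
    rewrite <- E at 2. apply (RInt_correct (V:=R_CompleteNormedModule)); auto. }
  pose proof (is_RInt_plus (V:=R_NormedModule) _ _ _ _ _ _
     (is_RInt_scal (V:=R_NormedModule) _ _ _ (w * cos A) _ Hc)
     (is_RInt_scal (V:=R_NormedModule) _ _ _ (w * sin A) _ Hs)) as HH.
  eapply is_RInt_ext.
  2:{ replace (2 * PI * (rho (Z.of_nat k - Z.of_nat l)%Z * (w * cos A))) with
       (plus (scal (w * cos A) (2 * PI * rho (Z.of_nat k - Z.of_nat l)%Z)) (scal (w * sin A) (0:R))).
      exact HH. unfold plus, scal; simpl. unfold mult; simpl. ring. }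
  intros u _. unfold plus, scal; simpl. unfold mult; simpl.
  replace (INR k * (s - u) - INR l * (t - u) + c) with (A - m * u) by (unfold A, m; ring).
  rewrite cos_minus. ring.
Qed.

Lemma G_int rho psi n p q c s t : (1 <= n)%nat ->
  spectral_density_of rho psi -> (forall u, continuous psi u) ->
  is_RInt (fun u => psi u * Kern n p q c (s - u) (t - u)) 0 (2 * PI)
    (2 * PI * INR n * Gdef rho n p q c s t).
Proof.
  intros Hn Hsp Hpsi.
  assert (HH := is_RInt_ssum _ _ n 0 (2 * PI) (fun k => is_RInt_ssum _ _ n 0 (2 * PI)
     (fun l => term_int rho psi k l p q c s t Hsp Hpsi))).
  assert (INR n <> 0) by (apply not_0_INR; lia).
  replace (2 * PI * INR n * Gdef rho n p q c s t) with
    (ssum (fun k => ssum (fun l => 2 * PI * (rho (Z.of_nat k - Z.of_nat l)%Z *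
       (INR k ^ p * INR l ^ q * cos (INR k * s - INR l * t + c)))) n) n).
  - eapply is_RInt_ext. 2: exact HH.
    intros u _. unfold Kern. rewrite <- ssum_scal. apply ssum_ext; intros k.
    rewrite <- ssum_scal. reflexivity.
  - unfold Gdef. rewrite <- Rmult_assoc, <- (ssum_scal (2 * PI * INR n * / INR n)).
    apply ssum_ext; intros k. rewrite <- ssum_scal. apply ssum_ext; intros l.
    field; auto.
Qed.

Definition sig (x : R) : R := Rabs (sin (x / 2)).

Lemma sig_ge0 x : 0 <= sig x.
Proof. apply Rabs_pos. Qed.

Lemma Rabs_cos1 y : Rabs (cos y) <= 1.
Proof. pose proof (COS_bound y). apply Rabs_le; lra. Qed.
Lemma Rabs_sin1 y : Rabs (sin y) <= 1.
Proof. pose proof (SIN_bound y). apply Rabs_le; lra. Qed.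

Definition Tsum (x ph : R) (j : nat) : R := ssum (fun k => cos (INR k * x + ph)) j.

Lemma tel x ph j : 2 * sin (x / 2) * Tsum x ph j = sin (INR j * x + x / 2 + ph) - sin (x / 2 + ph).
Proof.
  unfold Tsum. induction j; cbn [ssum].
  - simpl. replace (0 * x + x / 2 + ph) with (x / 2 + ph) by ring. ring.
  - rewrite Rmult_plus_distr_l, IHj, S_INR.
    replace (INR j * x + x / 2 + ph) with ((INR j + 1) * x + ph - x / 2) by field.
    replace ((INR j + 1) * x + x / 2 + ph) with ((INR j + 1) * x + ph + x / 2) by field.
    rewrite (sin_minus ((INR j + 1) * x + ph)), (sin_plus ((INR j + 1) * x + ph)). ring.
Qed.

Lemma T_bound1 x ph j : Rabs (Tsum x ph j) <= INR j.
Proof.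
  unfold Tsum. induction j; cbn [ssum].
  - rewrite Rabs_R0; simpl; lra.
  - rewrite S_INR. eapply Rle_trans. apply Rabs_triang.
    pose proof (Rabs_cos1 ((INR j + 1) * x + ph)). lra.
Qed.

Lemma T_bound2 x ph j : Rabs (Tsum x ph j) * sig x <= 1.
Proof.
  unfold sig. pose proof (tel x ph j) as H.
  assert (Rabs (2 * sin (x / 2) * Tsum x ph j) <= 2).
  { rewrite H. eapply Rle_trans. apply Rabs_triang. rewrite Rabs_Ropp.
    pose proof (SIN_bound (INR j * x + x / 2 + ph)). pose proof (SIN_bound (x / 2 + ph)).
    assert (Rabs (sin (INR j * x + x / 2 + ph)) <= 1) by (apply Rabs_le; lra).
    assert (Rabs (sin (x / 2 + ph)) <= 1) by (apply Rabs_le; lra). lra. }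
  rewrite !Rabs_mult in H0. rewrite Rabs_right in H0 by lra. lra.
Qed.

Lemma abel x ph N : ssum (fun k => INR k * cos (INR k * x + ph)) N =
  (INR N + 1) * Tsum x ph N - ssum (Tsum x ph) N.
Proof.
  unfold Tsum at 1. induction N; cbn [ssum]. simpl; ring.
  rewrite IHN. unfold Tsum; cbn [ssum]. rewrite S_INR. ring.
Qed.

Lemma A1_bound1 x ph j : Rabs (ssum (fun k => INR k * cos (INR k * x + ph)) j) <= INR j * INR j.
Proof.
  induction j; cbn [ssum].
  - rewrite Rabs_R0; simpl; lra.
  - rewrite S_INR. eapply Rle_trans. apply Rabs_triang. rewrite Rabs_mult.
    pose proof (Rabs_cos1 ((INR j + 1) * x + ph)). pose proof (pos_INR j). rewrite (Rabs_right (INR j + 1)) by lra. nra.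
Qed.

Lemma sumT_bound x ph j : Rabs (ssum (Tsum x ph) j) * sig x <= INR j.
Proof.
  induction j; cbn [ssum].
  - rewrite Rabs_R0; simpl; lra.
  - rewrite S_INR. pose proof (T_bound2 x ph (S j)). pose proof (sig_ge0 x).
    pose proof (Rabs_triang (ssum (Tsum x ph) j) (Tsum x ph (S j))). nra.
Qed.

Lemma A_bound p N x ph : (p <= 1)%nat -> (1 <= N)%nat ->
  Rabs (ssum (fun k => INR k ^ p * cos (INR k * x + ph)) N) * (1 + INR N * sig x)
    <= 4 * INR N ^ (p + 1).
Proof.
  intros Hp HN. pose proof (sig_ge0 x). assert (1 <= INR N) by (apply (le_INR 1); auto).
  destruct p as [|[|]]; try lia; simpl.
  - rewrite (ssum_ext _ (fun k => cos (INR k * x + ph))) by (intros; ring).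
    fold (Tsum x ph N). pose proof (T_bound1 x ph N). pose proof (T_bound2 x ph N).
    pose proof (Rabs_pos (Tsum x ph N)). nra.
  - rewrite (ssum_ext _ (fun k => INR k * cos (INR k * x + ph))) by (intros; ring).
    pose proof (A1_bound1 x ph N).
    assert (Rabs (ssum (fun k => INR k * cos (INR k * x + ph)) N) * sig x <= 3 * INR N).
    { rewrite abel. pose proof (T_bound2 x ph N). pose proof (sumT_bound x ph N).
      pose proof (Rabs_triang ((INR N + 1) * Tsum x ph N) (- ssum (Tsum x ph) N)) as HT.
      rewrite Rabs_Ropp, Rabs_mult, (Rabs_right (INR N + 1)) in HT by lra.
      pose proof (Rmult_le_compat_r (sig x) _ _ H HT). unfold Rminus. nra. }
    nra.
Qed.

Lemma cos_sub_PI2 y : cos (y + (- (PI / 2))) = sin y.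
Proof. rewrite cos_plus, cos_neg, sin_neg, cos_PI2, sin_PI2. ring. Qed.

Lemma Kern_split n p q c x y : Kern n p q c x y =
  ssum (fun k => INR k ^ p * cos (INR k * x + c)) n * ssum (fun l => INR l ^ q * cos (INR l * y + 0)) n +
  ssum (fun k => INR k ^ p * cos (INR k * x + (c - PI / 2))) n * ssum (fun l => INR l ^ q * cos (INR l * y + (- (PI / 2)))) n.
Proof.
  rewrite <- !ssum_prod, <- ssum_plus. unfold Kern. apply ssum_ext; intros k.
  rewrite <- ssum_plus. apply ssum_ext; intros l.
  replace (INR k * x + (c - PI / 2)) with ((INR k * x + c) + - (PI / 2)) by ring.
  rewrite !cos_sub_PI2, Rplus_0_r.
  replace (INR k * x - INR l * y + c) with ((INR k * x + c) - INR l * y) by ring.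
  rewrite cos_minus. ring.
Qed.

Lemma prod_bound a X M b Y M' : 0 <= a -> 0 <= b -> 0 < X -> 0 < Y ->
  a * X <= M -> b * Y <= M' -> a * b * (X * Y) <= M * M'.
Proof.
  intros. replace (a * b * (X * Y)) with ((a * X) * (b * Y)) by ring.
  apply Rmult_le_compat; auto; apply Rmult_le_pos; lra.
Qed.

Lemma Kern_bound n p q c x y : (p <= 1)%nat -> (q <= 1)%nat -> (1 <= n)%nat ->
  Rabs (Kern n p q c x y) * ((1 + INR n * sig x) * (1 + INR n * sig y))
    <= 32 * INR n ^ (p + q) * INR n ^ 2.
Proof.
  intros Hp Hq Hn. rewrite Kern_split.
  pose proof (sig_ge0 x). pose proof (sig_ge0 y). pose proof (pos_INR n).
  assert (0 < 1 + INR n * sig x) by nra. assert (0 < 1 + INR n * sig y) by nra.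
  pose proof (A_bound p n x c Hp Hn) as A1.
  pose proof (A_bound p n x (c - PI/2) Hp Hn) as A2.
  pose proof (A_bound q n y 0 Hq Hn) as B1.
  pose proof (A_bound q n y (- (PI/2)) Hq Hn) as B2.
  pose proof (prod_bound _ _ _ _ _ _ (Rabs_pos _) (Rabs_pos _) H2 H3 A1 B1) as P1.
  pose proof (prod_bound _ _ _ _ _ _ (Rabs_pos _) (Rabs_pos _) H2 H3 A2 B2) as P2.
  eapply Rle_trans. apply Rmult_le_compat_r. nra.
  eapply Rle_trans. apply Rabs_triang. rewrite !Rabs_mult. apply Rle_refl.
  replace (32 * INR n ^ (p + q) * INR n ^ 2) with (2 * (4 * INR n ^ (p + 1) * (4 * INR n ^ (q + 1)))).
  lra. rewrite !pow_add. ring.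
Qed.
Lemma sin_lb_eq y : sin_lb y = y - y^3/6 + y^5/120 - y^7/5040.
Proof. unfold sin_lb, sin_approx, sin_term. simpl. field. Qed.
Lemma sin_ge_third y : 0 <= y <= 2 -> y / 3 <= sin y.
Proof.
  intros Hy. assert (H4 := PI_4). assert (H3 := PI2_3_2).
  assert (H : sin_lb y <= sin y) by (apply SIN; lra). rewrite sin_lb_eq in H.
  assert (0 <= y^5 * (42 - y^2)). { apply Rmult_le_pos. apply pow_le; lra. nra. }
  assert (y^3 <= 4 * y) by nra. nra.
Qed.

Lemma sig_cont x : continuity_pt sig x.
Proof. unfold sig. apply (continuity_pt_comp (fun x => sin (x/2)) Rabs). reg. apply Rcontinuity_abs. Qed.

Definition hfun (n : nat) (c x : R) : R :=
  2 * INR n ^ 2 / ((1 + INR n * sig x) * (1 + INR n * sig x + c)).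

Lemma hfun_cont n c x : 0 <= c -> continuous (hfun n c) x.
Proof.
  intros Hc. apply continuity_pt_filterlim. unfold hfun.
  apply (continuity_pt_comp sig (fun z => 2 * INR n ^ 2 / ((1 + INR n * z) * (1 + INR n * z + c)))).
  apply sig_cont. reg. pose proof (sig_ge0 x). pose proof (pos_INR n).
  assert (0 <= INR n * sig x) by nra. apply Rgt_not_eq. apply Rmult_lt_0_compat; lra.
Qed.

Lemma sig_period x : sig (x + 2 * PI) = sig x.
Proof.
  unfold sig. replace ((x + 2 * PI) / 2) with (x / 2 + PI) by field.
  rewrite sin_plus, sin_PI, cos_PI. rewrite <- Rabs_Ropp. f_equal. ring.
Qed.

Lemma sig_even x : sig (- x) = sig x.
Proof. unfold sig. replace (- x / 2) with (- (x / 2)) by field. rewrite sin_neg, Rabs_Ropp. auto. Qed.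

Lemma RInt_period (f : R -> R) a : (forall x, continuous f x) ->
  (forall x, f (x + 2 * PI) = f x) -> RInt f a (a + 2 * PI) = RInt f 0 (2 * PI).
Proof.
  intros Hc Hp.
  assert (E : forall u v, ex_RInt f u v).
  { intros. apply (ex_RInt_continuous (V:=R_CompleteNormedModule)). intros; auto. }
  rewrite <- (RInt_Chasles (V:=R_CompleteNormedModule) f a (2 * PI) (a + 2 * PI)) by auto.
  rewrite <- (RInt_Chasles (V:=R_CompleteNormedModule) f a 0 (2 * PI)) by auto.
  assert (H1 : RInt f (2 * PI) (a + 2 * PI) = RInt f 0 a).
  { pose proof (RInt_comp_lin (V:=R_CompleteNormedModule) f 1 (2 * PI) 0 a) as H.
    replace (1 * 0 + 2 * PI) with (2 * PI) in H by ring.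
    replace (1 * a + 2 * PI) with (a + 2 * PI) in H by ring.
    rewrite <- H by auto. apply RInt_ext. intros x _. unfold scal; simpl; unfold mult; simpl.
    rewrite !Rmult_1_l, Hp. reflexivity. }
  rewrite H1. rewrite <- (opp_RInt_swap (V:=R_CompleteNormedModule) f 0 a) by auto.
  unfold plus, opp; simpl. ring.
Qed.

Lemma RInt_refl_shift (f : R -> R) s a b : (forall x, continuous f x) ->
  RInt (fun u => f (s - u)) a b = RInt f (s - b) (s - a).
Proof.
  intros Hc.
  assert (E : forall u v, ex_RInt f u v).
  { intros. apply (ex_RInt_continuous (V:=R_CompleteNormedModule)). intros; auto. }
  assert (Eg : ex_RInt (fun u => f (s - u)) a b).
  { apply (ex_RInt_continuous (V:=R_CompleteNormedModule)). intros z _.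
    apply (continuous_comp (U:=R_UniformSpace) (V:=R_UniformSpace) (fun u => s - u) f).
    apply (ex_derive_continuous (K:=R_AbsRing) (V:=R_NormedModule)). auto_derive; auto.
    apply Hc. }
  pose proof (RInt_comp_lin (V:=R_CompleteNormedModule) f (-1) s a b (E _ _)) as H.
  rewrite (RInt_ext _ (fun y => scal (-1) (f (s - y)))) in H.
  2:{ intros x _. f_equal. f_equal. ring. }
  rewrite (RInt_scal (V:=R_CompleteNormedModule)) in H by auto.
  replace (-1 * a + s) with (s - a) in H by ring.
  replace (-1 * b + s) with (s - b) in H by ring.
  rewrite <- (opp_RInt_swap (V:=R_CompleteNormedModule) f (s - a) (s - b)) by auto.
  rewrite <- H. unfold scal, opp; simpl. unfold mult; simpl.
  assert (Hr : forall z : R, z = - (-1 * z)) by (intros; ring). apply Hr.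
Qed.

Lemma RInt_per_even (f : R -> R) s : (forall x, continuous f x) ->
  (forall x, f (x + 2 * PI) = f x) -> (forall x, f (- x) = f x) ->
  RInt (fun u => f (s - u)) 0 (2 * PI) = 2 * RInt f 0 PI.
Proof.
  intros Hc Hp He.
  assert (E : forall u v, ex_RInt f u v).
  { intros. apply (ex_RInt_continuous (V:=R_CompleteNormedModule)). intros; auto. }
  rewrite RInt_refl_shift by auto.
  replace (s - 0) with ((s - 2 * PI) + 2 * PI) by ring.
  rewrite RInt_period by auto.
  rewrite <- (RInt_period f (- PI)) by auto.
  replace (- PI + 2 * PI) with PI by ring.
  rewrite <- (RInt_Chasles (V:=R_CompleteNormedModule) f (- PI) 0 PI) by auto.
  assert (RInt f (- PI) 0 = RInt f 0 PI).
  { pose proof (RInt_refl_shift f 0 0 PI Hc) as H.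
    replace (0 - PI) with (- PI) in H by ring. replace (0 - 0) with 0 in H by ring.
    rewrite <- H. apply RInt_ext. intros x _. rewrite <- He. f_equal. ring. }
  rewrite H. unfold plus; simpl.
  assert (Hr : forall z : R, z + z = 2 * z) by (intros; ring). apply Hr.
Qed.

Lemma div_le_div a b c d : 0 < b -> 0 < d -> a * d <= c * b -> a / b <= c / d.
Proof.
  intros Hb Hd H. apply (Rmult_le_reg_r (b * d)). nra.
  replace (a / b * (b * d)) with (a * d) by (field; lra).
  replace (c / d * (b * d)) with (c * b) by (field; lra). auto.
Qed.

Lemma sig_lower x : 0 <= x <= PI -> x / 6 <= sig x.
Proof.
  intros Hx. assert (H4 := PI_4). unfold sig.
  pose proof (sin_ge_third (x / 2)). rewrite Rabs_right by lra. lra.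
Qed.

Lemma h_int n c : (1 <= n)%nat -> 0 < c ->
  RInt (hfun n c) 0 PI <= 12 * INR n / c * ln (1 + c).
Proof.
  intros Hn Hc. assert (HN : 1 <= INR n) by (apply (le_INR 1); auto).
  assert (PIpos := PI_RGT_0).
  set (H := fun x => 2 * INR n ^ 2 / ((1 + INR n * x / 6) * (1 + INR n * x / 6 + c))).
  set (F := fun x => 12 * INR n / c * (ln (1 + INR n * x / 6) - ln (1 + INR n * x / 6 + c))).
  assert (HI : is_RInt H 0 PI (minus (F PI) (F 0))).
  { apply (is_RInt_derive (V:=R_CompleteNormedModule)).
    - intros x Hx. rewrite Rmin_left, Rmax_right in Hx by lra.
      unfold F, H. auto_derive. repeat split; nra.
      field. repeat split; try lra; nra.
    - intros x Hx. rewrite Rmin_left, Rmax_right in Hx by lra.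
      apply continuity_pt_filterlim. unfold H. reg.
      apply Rgt_not_eq. apply Rmult_lt_0_compat; nra. }
  assert (ExH : ex_RInt H 0 PI) by (eexists; eauto).
  assert (Exh : ex_RInt (hfun n c) 0 PI).
  { apply (ex_RInt_continuous (V:=R_CompleteNormedModule)). intros; apply hfun_cont; lra. }
  eapply Rle_trans. apply (RInt_le _ H); auto. lra.
  { intros x Hx. unfold hfun, H. pose proof (sig_lower x). 
    apply div_le_div. apply Rmult_lt_0_compat; nra. apply Rmult_lt_0_compat; nra.
    apply Rmult_le_compat_l. nra. apply Rmult_le_compat; nra. }
  rewrite (is_RInt_unique _ _ _ _ HI). unfold minus, plus, opp, F; simpl.
  replace (INR n * 0 / 6) with 0 by field. rewrite Rplus_0_r, ln_1.
  assert (ln (1 + INR n * PI / 6) <= ln (1 + INR n * PI / 6 + c)).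
  { apply Rlt_le, ln_increasing; nra. }
  assert (0 <= 12 * INR n / c) by (apply Rmult_le_pos; [lra| apply Rlt_le, Rinv_0_lt_compat; lra]).
  assert (Hr : forall z w y : R, 0 <= z -> w <= 0 -> z * w + - (z * (0 - y)) <= z * y) by (intros; nra).
  apply Hr; auto. lra.
Qed.

Lemma sig_tri s t u : sig (s - t) <= sig (s - u) + sig (t - u).
Proof.
  unfold sig. replace ((s - t) / 2) with ((s - u) / 2 - (t - u) / 2) by field.
  rewrite sin_minus. eapply Rle_trans. apply Rabs_triang. rewrite Rabs_Ropp, !Rabs_mult.
  pose proof (Rabs_cos1 ((t - u) / 2)). pose proof (Rabs_cos1 ((s - u) / 2)).
  pose proof (Rabs_pos (sin ((s - u) / 2))). pose proof (Rabs_pos (sin ((t - u) / 2))). nra.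
Qed.

Lemma pair_h n D x y : (1 <= n)%nat -> 0 <= D -> D <= sig x + sig y ->
  INR n ^ 2 / ((1 + INR n * sig x) * (1 + INR n * sig y)) <=
  hfun n (INR n * D / 2) x + hfun n (INR n * D / 2) y.
Proof.
  intros Hn HD HS. assert (HN : 1 <= INR n) by (apply (le_INR 1); auto).
  pose proof (sig_ge0 x). pose proof (sig_ge0 y).
  assert (0 <= INR n * sig x) by nra. assert (0 <= INR n * sig y) by nra.
  assert (0 <= INR n * D) by nra.
  assert (0 <= hfun n (INR n * D / 2) x).
  { unfold hfun. apply Rlt_le, Rdiv_lt_0_compat. nra. apply Rmult_lt_0_compat; nra. }
  assert (0 <= hfun n (INR n * D / 2) y).
  { unfold hfun. apply Rlt_le, Rdiv_lt_0_compat. nra. apply Rmult_lt_0_compat; nra. }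
  destruct (Rle_lt_dec (sig x) (sig y)).
  - assert (INR n ^ 2 / ((1 + INR n * sig x) * (1 + INR n * sig y)) <= hfun n (INR n * D / 2) x).
    { unfold hfun. apply div_le_div. apply Rmult_lt_0_compat; nra. apply Rmult_lt_0_compat; nra.
      assert (INR n * sig x <= INR n * sig y) by nra.
      assert (INR n * D <= 2 * INR n * sig y) by nra.
      assert (0 < 1 + INR n * sig x) by nra.
      assert (1 + INR n * sig x + INR n * D / 2 <= 2 * (1 + INR n * sig y)) by nra.
      assert (0 <= INR n ^ 2) by (apply pow_le; lra). 
      assert (Hm := Rmult_le_compat_l ((1 + INR n * sig x) * INR n ^ 2) _ _ ltac:(nra) H9). nra. }
    lra.
  - assert (INR n ^ 2 / ((1 + INR n * sig x) * (1 + INR n * sig y)) <= hfun n (INR n * D / 2) y).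
    { unfold hfun. apply div_le_div. apply Rmult_lt_0_compat; nra. apply Rmult_lt_0_compat; nra.
      assert (INR n * sig y <= INR n * sig x) by nra.
      assert (INR n * D <= 2 * INR n * sig x) by nra.
      assert (0 < 1 + INR n * sig y) by nra.
      assert (1 + INR n * sig y + INR n * D / 2 <= 2 * (1 + INR n * sig x)) by nra.
      assert (0 <= INR n ^ 2) by (apply pow_le; lra). 
      assert (Hm := Rmult_le_compat_l ((1 + INR n * sig y) * INR n ^ 2) _ _ ltac:(nra) H9). nra. }
    lra.
Qed.

Lemma ex_shift (f : R -> R) s a b : (forall x, continuous f x) -> ex_RInt (fun u => f (s - u)) a b.
Proof.
  intros Hc. apply (ex_RInt_continuous (V:=R_CompleteNormedModule)). intros z _.
  apply (continuous_comp (U:=R_UniformSpace) (V:=R_UniformSpace) (fun u => s - u) f).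
  apply (ex_derive_continuous (K:=R_AbsRing) (V:=R_NormedModule)). auto_derive; auto.
  apply Hc.
Qed.

Lemma abs_RInt_le_g f g a b : a <= b -> ex_RInt f a b -> ex_RInt g a b ->
  (forall x, a < x < b -> Rabs (f x) <= g x) -> Rabs (RInt f a b) <= RInt g a b.
Proof.
  intros Hab Ef Eg H. apply Rabs_le. split.
  - assert (RInt (fun x => - g x) a b <= RInt f a b).
    { apply RInt_le; auto. apply (ex_RInt_opp (V:=R_NormedModule) g); auto.
      intros x Hx. specialize (H x Hx). apply Rabs_le_between in H. lra. }
    rewrite (RInt_opp (V:=R_CompleteNormedModule) g) in H0 by auto. unfold opp in H0; simpl in H0. lra.
  - apply RInt_le; auto. intros x Hx. specialize (H x Hx). apply Rabs_le_between in H. lra.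
Qed.

Lemma hfun_period n c x : hfun n c (x + 2 * PI) = hfun n c x.
Proof. unfold hfun. rewrite sig_period. auto. Qed.
Lemma hfun_even n c x : hfun n c (- x) = hfun n c x.
Proof. unfold hfun. rewrite sig_even. auto. Qed.

Lemma main_bound rho psi n p q c0 s t M : (1 <= n)%nat -> (p <= 1)%nat -> (q <= 1)%nat ->
  spectral_density_of rho psi -> (forall u, continuous psi u) ->
  (forall u, 0 <= u <= 2 * PI -> 0 < psi u <= M) -> 0 < sig (s - t) ->
  Rabs (Gdef rho n p q c0 s t) <=
    M * 32 * 48 / (2 * PI) * INR n ^ (p + q) *
    (ln (1 + INR n * sig (s - t) / 2) / (INR n * sig (s - t) / 2)).
Proof.
  intros Hn Hp Hq Hsp Hpsi HM HD.
  assert (HN : 1 <= INR n) by (apply (le_INR 1); auto).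
  assert (PIpos := PI_RGT_0).
  set (D := sig (s - t)) in *. set (c := INR n * D / 2).
  assert (Hc : 0 < c) by (unfold c; nra).
  assert (HM0 : 0 < M) by (destruct (HM 0); lra).
  pose proof (G_int rho psi n p q c0 s t Hn Hsp Hpsi) as HI.
  set (K := M * 32 * INR n ^ (p + q)).
  assert (HK : 0 <= K) by (unfold K; apply Rmult_le_pos; [lra | apply pow_le; lra]).
  assert (Hh : forall x, continuous (hfun n c) x) by (intros; apply hfun_cont; lra).
  assert (E1 := ex_shift (hfun n c) s 0 (2 * PI) Hh).
  assert (E2 := ex_shift (hfun n c) t 0 (2 * PI) Hh).
  assert (Hbig : Rabs (RInt (fun u => psi u * Kern n p q c0 (s - u) (t - u)) 0 (2 * PI)) <=
                 RInt (fun u => K * (hfun n c (s - u) + hfun n c (t - u))) 0 (2 * PI)).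
  { apply abs_RInt_le_g. lra. eexists; eauto.
    apply (ex_RInt_scal (V:=R_NormedModule)). apply (ex_RInt_plus (V:=R_NormedModule)); auto.
    intros u Hu. destruct (HM u) as [Hp0 HpM]; try lra.
    rewrite Rabs_mult, (Rabs_right (psi u)) by lra.
    pose proof (Kern_bound n p q c0 (s - u) (t - u) Hp Hq Hn) as KB.
    pose proof (pair_h n D (s - u) (t - u) Hn ltac:(lra) (sig_tri s t u)) as PH. fold c in PH.
    pose proof (sig_ge0 (s - u)). pose proof (sig_ge0 (t - u)).
    set (X := (1 + INR n * sig (s - u))) in *. set (Y := (1 + INR n * sig (t - u))) in *.
    assert (0 < X) by (unfold X; nra). assert (0 < Y) by (unfold Y; nra).
    assert (Rabs (Kern n p q c0 (s - u) (t - u)) <= 32 * INR n ^ (p + q) * (INR n ^ 2 / (X * Y))).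
    { apply (Rmult_le_reg_r (X * Y)). nra. unfold Rdiv. rewrite Rmult_assoc, (Rmult_assoc (INR n ^ 2)), Rinv_l by nra. lra. }
    assert (0 <= 32 * INR n ^ (p + q)) by (apply Rmult_le_pos; [lra | apply pow_le; lra]).
    assert (Rabs (Kern n p q c0 (s - u) (t - u)) <= 32 * INR n ^ (p + q) * (hfun n c (s - u) + hfun n c (t - u))).
    { eapply Rle_trans. eauto. apply Rmult_le_compat_l; auto. }
    unfold K. pose proof (Rabs_pos (Kern n p q c0 (s - u) (t - u))).
    assert (psi u * Rabs (Kern n p q c0 (s - u) (t - u)) <= M * Rabs (Kern n p q c0 (s - u) (t - u))) by nra.
    nra. }
  rewrite (RInt_scal (V:=R_CompleteNormedModule)) in Hbig by (apply (ex_RInt_plus (V:=R_NormedModule)); auto).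
  rewrite (RInt_plus (V:=R_CompleteNormedModule)) in Hbig by auto.
  rewrite !RInt_per_even in Hbig; auto.
  2,4: intros; apply hfun_period. 
  2,3: intros; apply hfun_even.
  rewrite (is_RInt_unique _ _ _ _ HI) in Hbig.
  unfold scal, plus in Hbig; simpl in Hbig; unfold mult in Hbig; simpl in Hbig.
  pose proof (h_int n c Hn Hc) as Hhi.
  rewrite Rabs_mult, Rabs_mult, (Rabs_right (2 * PI)), (Rabs_right (INR n)) in Hbig by lra.
  assert (HG : 2 * PI * INR n * Rabs (Gdef rho n p q c0 s t) <= K * (4 * (12 * INR n / c * ln (1 + c)))).
  { eapply Rle_trans. eauto. apply Rmult_le_compat_l; auto. lra. }
  apply (Rmult_le_reg_l (2 * PI * INR n)). nra.
  eapply Rle_trans. eauto. unfold K. right. field. lra.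
Qed.

Lemma dist_sig s t : distT s t <= 6 * sig (s - t).
Proof.
  unfold distT, sig. set (x := (s - t) / (2 * PI)).
  assert (PIpos := PI_RGT_0). assert (H4 := PI_4). assert (H3 := PI2_3_2).
  destruct (base_fp x) as [F0 F1]. unfold frac_part in *.
  set (z := Int_part x) in *. set (f := x - IZR z) in *.
  assert (E : (s - t) / 2 = PI * f + IZR z * PI) by (unfold f, x; field; lra).
  rewrite E, sin_plus, (sin_eq_0_1 (IZR z * PI)) by (exists z; auto).
  rewrite Rmult_0_r, Rplus_0_r, Rabs_mult.
  assert (Hc : Rabs (cos (IZR z * PI)) = 1).
  { pose proof (sin2_cos2 (IZR z * PI)). rewrite (sin_eq_0_1 (IZR z * PI)) in H by (exists z; auto).
    unfold Rsqr in H. pose proof (Rabs_pos (cos (IZR z * PI))).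
    assert (Rabs (cos (IZR z * PI)) * Rabs (cos (IZR z * PI)) = 1).
    { rewrite <- Rabs_mult. rewrite Rabs_right; nra. }
    nra. }
  rewrite Hc, Rmult_1_r.
  destruct (Rle_dec f (1 - f)).
  - rewrite Rmin_left by lra. pose proof (sin_ge_third (PI * f)).
    rewrite Rabs_right by nra. nra.
  - rewrite Rmin_right by lra. rewrite <- sin_PI_x. pose proof (sin_ge_third (PI - PI * f)).
    rewrite Rabs_right by nra. nra.
Qed.

Lemma ln_bound c al : 0 < c -> 0 < al < 1 ->
  ln (1 + c) <= (1 + / (1 - al)) * exp ((1 - al) * ln c).
Proof.
  intros Hc Ha. assert (0 < / (1 - al)) by (apply Rinv_0_lt_compat; lra).
  destruct (Rle_dec c 1).
  - assert (ln (1 + c) <= c).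
    { destruct (Req_dec c 0). lra. pose proof (exp_ineq1 c H0).
      apply Rle_trans with (ln (exp c)). apply Rlt_le, ln_increasing; lra. rewrite ln_exp; lra. }
    assert (ln c <= 0). { rewrite <- ln_1. destruct (Req_dec c 1). subst; lra. apply Rlt_le, ln_increasing; lra. }
    assert (c <= exp ((1 - al) * ln c)).
    { rewrite <- (exp_ln c) at 1 by lra. destruct (Req_dec (ln c) ((1 - al) * ln c)) as [Heq|Hne].
      apply Req_le; f_equal; exact Heq. apply Rlt_le, exp_increasing. nra. }
    assert (0 < exp ((1 - al) * ln c)) by apply exp_pos. nra.
  - assert (ln (1 + c) <= ln 2 + ln c).
    { rewrite <- ln_mult by lra. destruct (Req_dec (1 + c) (2 * c)). rewrite H0; lra.
      apply Rlt_le, ln_increasing; lra. }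
    assert (ln 2 <= 1).
    { apply Rle_trans with (ln (exp 1)). 2: rewrite ln_exp; lra.
      assert (1 + 1 < exp 1) by (apply exp_ineq1; lra).
      apply Rlt_le, ln_increasing; lra. }
    set (w := (1 - al) * ln c).
    assert (0 < ln c) by (rewrite <- ln_1; apply ln_increasing; lra).
    assert (0 < w) by (unfold w; nra).
    assert (w < exp w) by (pose proof (exp_ineq1 w); lra).
    assert (1 <= exp w) by (pose proof (exp_ineq1 w); lra).
    assert (ln c = w * / (1 - al)) by (unfold w; field; lra).
    rewrite H6 in H0. nra.
Qed.

Theorem lemma1 (rho : Z -> R) (psi : R -> R) (a b : nat) (alpha : R) :
  cont_pos_density_on_T psi ->
  spectral_density_of rho psi ->
  (a <= 1)%nat -> (b <= 1)%nat ->
  0 < alpha < 1 ->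
  exists C : R, forall (n : nat) (s t : R),
    (1 <= n)%nat -> 0 < distT s t ->
    Rabs (r_der rho a b n s t) <=
      C * INR n ^ (a + b) / Rpower (INR n * distT s t) alpha.
Proof.
  intros [Hcont [_ Hpos]] Hsp Ha Hb Hal.
  assert (PIpos := PI_RGT_0).
  destruct (continuity_ab_maj psi 0 (2 * PI)) as [Mx [HMx _]]. lra.
  { intros; apply continuity_pt_filterlim; apply Hcont. }
  set (M := psi Mx).
  assert (HM0 : 0 < M) by apply Hpos.
  set (Kal := 1 + / (1 - alpha)).
  assert (HKal : 0 < Kal) by (unfold Kal; assert (0 < / (1 - alpha)) by (apply Rinv_0_lt_compat; lra); lra).
  set (A0 := M * 32 * 48 / (2 * PI)).
  assert (HA0 : 0 < A0) by (unfold A0; apply Rdiv_lt_0_compat; nra).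
  exists (A0 * (Kal * 12)).
  intros n s t Hn Hd.
  assert (HN : 1 <= INR n) by (apply (le_INR 1); auto).
  rewrite rder_G by auto.
  pose proof (dist_sig s t) as HDs.
  set (D := sig (s - t)) in *.
  assert (HD : 0 < D) by lra.
  set (c := INR n * D / 2).
  assert (Hc : 0 < c) by (unfold c; nra).
  eapply Rle_trans.
  { apply (main_bound rho psi n a b _ s t M); auto.
    all: intros u Hu; split; [apply Hpos | apply HMx; auto]. }
  fold D. fold c. fold A0.
  set (P := INR n ^ (a + b)).
  assert (HP : 0 < P) by (unfold P; apply pow_lt; lra).
  set (y := INR n * distT s t).
  assert (Hy : 0 < y) by (unfold y; nra).
  assert (Hyc : y <= 12 * c) by (unfold y, c; nra).
  assert (L1 := ln_bound c alpha Hc Hal). fold Kal in L1.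
  assert (E1 : exp ((1 - alpha) * ln c) / c = exp (- alpha * ln c)).
  { rewrite <- (exp_ln c) at 2 by lra. unfold Rdiv. rewrite <- exp_Ropp, <- exp_plus. f_equal. ring. }
  assert (L2 : Rpower y alpha <= 12 * exp (alpha * ln c)).
  { unfold Rpower. assert (ln y <= ln 12 + ln c).
    { rewrite <- ln_mult by lra. destruct (Req_dec y (12 * c)) as [Heq|Hne]. rewrite Heq; lra.
      apply Rlt_le, ln_increasing; lra. }
    assert (0 < ln 12) by (rewrite <- ln_1; apply ln_increasing; lra).
    apply Rle_trans with (exp (ln 12 + alpha * ln c)).
    { destruct (Req_dec (alpha * ln y) (ln 12 + alpha * ln c)) as [Heq|Hne]. rewrite Heq; lra.
      apply Rlt_le, exp_increasing. nra. }
    rewrite exp_plus, exp_ln by lra. lra. }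
  assert (Hpow : 0 < Rpower y alpha) by (unfold Rpower; apply exp_pos).
  assert (E2 : exp (- alpha * ln c) * exp (alpha * ln c) = 1).
  { rewrite <- exp_plus. replace (- alpha * ln c + alpha * ln c) with 0 by ring. apply exp_0. }
  assert (Hq : ln (1 + c) / c <= Kal * exp (- alpha * ln c)).
  { rewrite <- E1. unfold Rdiv. rewrite <- Rmult_assoc. apply Rmult_le_compat_r.
    apply Rlt_le, Rinv_0_lt_compat; lra. auto. }
  assert (Hq2 : exp (- alpha * ln c) <= 12 / Rpower y alpha).
  { apply (Rmult_le_reg_r (Rpower y alpha)); auto. unfold Rdiv.
    rewrite Rmult_assoc, Rinv_l by lra. pose proof (exp_pos (- alpha * ln c)). nra. }
  apply Rle_trans with (A0 * P * (Kal * (12 / Rpower y alpha))).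
  { apply Rmult_le_compat_l. nra. eapply Rle_trans. eauto. apply Rmult_le_compat_l; lra. }
  right. unfold Rdiv. ring.
Qed.
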